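(* Let $n\ge 2$ and let $\Omega\subset\mathbb{R}^n$ be a smooth bounded strictly convex domain. Let $f,g$ be positive $C^2$ functions of one real variable with $G(s):=g(s)+2s\,g'(s)>0$ for $s>0$. Let $u$ be the solution of \[ \mathrm{div}\big(g(|\nabla u|^2)\nabla u\big)=f(u)\,G(|\nabla u|^2)\ \text{in }\Omega,\qquad u=0\ \text{on }\partial\Omega, \] let $F(y)=\int_y^0 f(s)\,ds$ for $y\le 0$, and $\Phi(\mathbf{x};\beta)=|\nabla u(\mathbf{x})|^2-\beta F(u(\mathbf{x}))$. If $\beta\in[1,2]$, then $\Phi(\cdot;\beta)$ is not identically constant on $\overline\Omega$. *)

(* Defs.v *)
From HB Require Import structures.
From mathcomp Require Import all_boot all_order all_algebra.
From mathcomp Require Import all_classical all_reals all_analysis.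
Set Implicit Arguments. Unset Strict Implicit. Unset Printing Implicit Defensive.
Import Order.TTheory GRing.Theory Num.Theory.
Import numFieldNormedType.Exports.
Local Open Scope classical_set_scope.
Local Open Scope ring_scope.

Section Defs.
Variables (R : realType) (n : nat).

Definition ebasis (i : 'I_n) : 'rV[R]_n := delta_mx 0 i.

Definition partial (h : 'rV[R]_n -> R) (i : 'I_n) (x : 'rV[R]_n) : R :=
  'D_(ebasis i) h x.

Definition grad (h : 'rV[R]_n -> R) (x : 'rV[R]_n) : 'rV[R]_n :=
  \row_i partial h i x.

Definition sqnorm (v : 'rV[R]_n) : R := \sum_i (v 0 i) ^+ 2.

Definition div (V : 'rV[R]_n -> 'rV[R]_n) (x : 'rV[R]_n) : R :=
  \sum_i partial (fun y => V y 0 i) i x.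

Fixpoint Ck (k : nat) (h : 'rV[R]_n -> R) : Prop :=
  match k with
  | 0 => continuous h
  | k.+1 => (forall x, differentiable h x) /\ forall i, Ck k (partial h i)
  end.

Definition smooth (h : 'rV[R]_n -> R) : Prop := forall k, Ck k h.

Definition C1_on (A : set 'rV[R]_n) (h : 'rV[R]_n -> R) : Prop :=
  forall x, A x -> differentiable h x /\ forall i, {for x, continuous (partial h i)}.

Definition C2_on (A : set 'rV[R]_n) (h : 'rV[R]_n -> R) : Prop :=
  C1_on A h /\ forall i, C1_on A (partial h i).

(* bounded smooth domain: open, connected, bounded, with a smooth global
   defining function rho (Omega = {rho < 0}, grad rho <> 0 on {rho = 0}) *)
Definition smooth_bounded_domain (Om : set 'rV[R]_n) : Prop :=
  [/\ open Om, connected Om, Om !=set0,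
      (exists M : R, forall x, Om x -> `|x| <= M) &
      exists rho : 'rV[R]_n -> R,
        [/\ smooth rho, Om = [set x | rho x < 0] &
            forall x, rho x = 0 -> grad rho x != 0]].

Definition strictly_convex (Om : set 'rV[R]_n) : Prop :=
  forall x y t, closure Om x -> closure Om y -> x != y -> 0 < t < 1 ->
    Om (t *: x + (1 - t) *: y).

End Defs.

Fixpoint Ck1 {R : realType} (k : nat) (h : R -> R) : Prop :=
  match k with
  | 0 => continuous h
  | k.+1 => (forall x, derivable h x 1) /\ Ck1 k (derive1 h)
  end.

Definition Fprim {R : realType} (f : R -> R) (y : R) : R :=
  Rintegral lebesgue_measure `[y, 0] f.

(* Main.v *)
Require Import Defs.
From HB Require Import structures.
From mathcomp Require Import all_boot all_order all_algebra.
From mathcomp Require Import all_classical all_reals all_analysis.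
Import Order.TTheory GRing.Theory Num.Theory.
Import numFieldNormedType.Exports.
Local Open Scope classical_set_scope.
Local Open Scope ring_scope.

Section G.
Variables (R : realType) (n : nat).

Lemma closure_bound (Om : set 'rV[R]_n) M : (forall x, Om x -> `|x| <= M) ->
  forall x, closure Om x -> `|x| <= `|M| + 1.
Proof.
move=> HM x hx.
have r0 : (0:R) < `|M| + 1 by rewrite ltr_wpDl.
have sub : Om `<=` ball (0 : 'rV[R]_n) (`|M| + 1).
  move=> y Oy; rewrite -ball_normE /ball_ /= sub0r normrN.
  by apply: le_lt_trans (HM _ Oy) _; rewrite (le_lt_trans (ler_norm M)) // ltrDl.
have : closed_ball (0 : 'rV[R]_n) (`|M| + 1) x := closureS sub hx.
by rewrite closed_ballE // /closed_ball_ /= sub0r normrN.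
Qed.

Lemma compact_closure (Om : set 'rV[R]_n) M : (forall x, Om x -> `|x| <= M) ->
  compact (closure Om).
Proof.
move=> HM; apply: bounded_closed_compact; last exact: closed_closure.
exists (`|M| + 1); split; first exact: num_real.
move=> r hr x hx /=; apply: le_trans (ltW hr).
exact: closure_bound HM _ hx.
Qed.

End G.
Section S.
Variables (R : realType) (n : nat).
Implicit Types (h : 'rV[R]_n -> R) (x v : 'rV[R]_n).

Lemma line_quot h x v t :
  (fun s : R => s^-1 *: (((fun r : R => h (r *: v + x)) \o shift t) (s *: 1) - h (t *: v + x)))
  = (fun s : R => s^-1 *: ((h \o shift (t *: v + x)) (s *: v) - h (t *: v + x))).
Proof.
apply/funext => s /=; congr (_ *: (h _ - _)).
by rewrite scalerDl addrA; congr (_ *: _ + _ + _); rewrite /GRing.scale /= mulr1.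
Qed.

Lemma line_ball (A : set 'rV[R]_n) x v : open A -> A x ->
  exists2 r : R, 0 < r & forall t : R, `|t| < r -> A (t *: v + x).
Proof.
move=> oA Ax.
have /nbhs_ballP[e e0 sub] : nbhs x A by apply: oA.
exists (e / (`|v| + 1)); first by rewrite divr_gt0 // ltr_wpDl.
move=> t ht; apply: sub; rewrite -ball_normE /ball_ /=.
rewrite addrC opprD subrK normrN normrZ.
have v1 : 0 < `|v| + 1 by rewrite ltr_wpDl.
rewrite ltr_pdivlMr // in ht.
apply: le_lt_trans ht; apply: ler_wpM2l => //; by rewrite lerDl.
Qed.


Lemma line_derivable h x v t : derivable (fun r : R => h (r *: v + x)) t 1 =
  derivable h (t *: v + x) v.
Proof. by rewrite /derivable line_quot. Qed.

Lemma line_derive h x v t : 'D_1 (fun r : R => h (r *: v + x)) t =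
  'D_v h (t *: v + x).
Proof. by rewrite /derive line_quot. Qed.

Lemma fermat (A : set 'rV[R]_n) h x : open A -> A x ->
  (forall y, A y -> differentiable h y) ->
  ((forall y, A y -> h x <= h y) \/ (forall y, A y -> h y <= h x)) ->
  forall v, 'D_v h x = 0.
Proof.
move=> oA Ax dh ext v.
have [r r0 hr] := @line_ball A x v oA Ax.
have itv t : t \in `]-r, r[ -> A (t *: v + x).
  by rewrite in_itv /= => /andP[h1 h2]; apply: hr; rewrite ltr_norml h1 h2.
have dk t : t \in `]-r, r[ -> derivable (fun s : R => h (s *: v + x)) t 1.
  by move=> /itv Ht; rewrite line_derivable; apply: diff_derivable; apply: dh.
have c0 : (0:R) \in `]-r, r[ by rewrite in_itv /= oppr_lt0 r0.
have le : -r <= r by rewrite ge0_cp // ltW.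
have : is_derive (0:R) (1:R) (fun s : R => h (s *: v + x)) (0:R).
  case: ext => ext.
    apply: derive1_at_min le dk c0 _ => t /itv Ht; rewrite scale0r add0r; exact: ext.
  apply: derive1_at_max le dk c0 _ => t /itv Ht; rewrite scale0r add0r; exact: ext.
move=> H; have := @derive_val _ _ _ _ _ _ _ H; by rewrite line_derive scale0r add0r.
Qed.

Lemma boundary_pt (Om : set 'rV[R]_n) M : (0 < n)%N -> open Om -> Om !=set0 ->
  (forall x, Om x -> `|x| <= M) -> exists b, closure Om b /\ ~ Om b.
Proof.
move=> n0 oOm [a Oa] HM.
pose i := Ordinal n0.
have K0 : closure Om !=set0 by exists a; apply: subset_closure.
have cK : {within closure Om, continuous (fun x : 'rV[R]_n => x 0 i)}.
  by apply: continuous_subspaceT; exact: coord_continuous.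
have [p pK pmax] := EVT_max_rV K0 (@compact_closure R n Om M HM) cK.
rewrite inE in pK; exists p; split => // Op.
have [r r0 hr] := @line_ball Om p (delta_mx 0 i) oOm Op.
have hq : Om ((r / 2) *: delta_mx 0 i + p).
  by apply: hr; rewrite gtr0_norm ?divr_gt0 // ltr_pdivrMr // ltr_pMr // ltr1n.
have := pmax _ (mem_set (subset_closure hq)).
rewrite !mxE !eqxx /= mulr1 gerDr leNgt => /negP; apply.
by rewrite divr_gt0.
Qed.

End S.
Lemma Fprim_nonneg (R : realType) (f : R -> R) y : 0 <= y -> Fprim f y = 0.
Proof.
rewrite le_eqVlt => /predU1P[<-|y0]; rewrite /Fprim.
  by rewrite set_itv1 Rintegral_set1.
rewrite set_itv_ge ?Rintegral_set0 //.
by rewrite bnd_simp -ltNge.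
Qed.

Lemma Fprim_neg (R : realType) (f : R -> R) y : continuous f ->
  (forall s, 0 < f s) -> y < 0 -> 0 < Fprim f y.
Proof.
move=> cf fpos y0; rewrite /Fprim.
have cfw : {within `[y, 0], continuous f}.
  by apply: continuous_subspaceT.
have [c _ cmin] := EVT_min (ltW y0) cfw.
have mI : measurable (`[y, 0%R] : set R) by [].
apply: (@lt_le_trans _ _ (\int[lebesgue_measure]_(x in `[y, 0%R]) f c)).
  rewrite Rintegral_cst //.
  have -> : fine (lebesgue_measure (`[y, 0]%classic : set R)) = - y.
    by rewrite lebesgue_measure_itv /= lte_fin y0 add0e.
  by apply: mulr_gt0 => //; rewrite oppr_gt0.
apply: le_Rintegral => //.
- apply: continuous_compact_integrable; first exact: segment_compact.
  by apply: continuous_subspaceT => z; exact: cvg_cst.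
- apply: continuous_compact_integrable; first exact: segment_compact.
  exact: cfw.

Qed.

Lemma sqnorm_ge0 (R : realType) n (v : 'rV[R]_n) : 0 <= sqnorm v.
Proof. by apply: sumr_ge0 => i _; exact: sqr_ge0. Qed.

Lemma sqnorm_eq0 (R : realType) n (v : 'rV[R]_n) : sqnorm v = 0 -> v = 0.
Proof.
move=> /eqP; rewrite psumr_eq0 => [/allP H|i _]; last exact: sqr_ge0.
apply/rowP => j; rewrite mxE; apply/eqP; rewrite -sqrf_eq0.
by apply: H; rewrite mem_index_enum.
Qed.

Lemma sqnorm0 (R : realType) n : sqnorm (0 : 'rV[R]_n) = 0.
Proof. by rewrite /sqnorm big1 // => i _; rewrite mxE expr0n. Qed.

Theorem lemma3p2 (R : realType) (n : nat) (Om : set 'rV[R]_n)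
  (f g : R -> R) (u : 'rV[R]_n -> R) (Du : 'rV[R]_n -> 'rV[R]_n) (beta : R) :
  (2 <= n)%N ->
  smooth_bounded_domain Om -> strictly_convex Om ->
  (forall s, 0 < f s) -> (forall s, 0 < g s) -> Ck1 2 f -> Ck1 2 g ->
  (forall s, 0 < s -> 0 < g s + 2 * s * derive1 g s) ->
  (* u is a classical solution: C^2 in Omega, continuous up to the boundary,
     with gradient extending continuously (as Du) to the closure *)
  C2_on Om u ->
  {within closure Om, continuous u} ->
  {within closure Om, continuous Du} ->
  (forall x, Om x -> Du x = grad u x) ->
  (forall x, Om x ->
     div (fun y => g (sqnorm (grad u y)) *: grad u y) x
     = f (u x) * (g (sqnorm (grad u x))
                  + 2 * sqnorm (grad u x) * derive1 g (sqnorm (grad u x)))) ->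
  (forall x, closure Om x -> ~ Om x -> u x = 0) ->
  1 <= beta <= 2 ->
  ~ (exists c : R, forall x, closure Om x ->
        sqnorm (Du x) - beta * Fprim f (u x) = c).
Proof.
move=> n2 [oOm _ Om0 [M HM] _] _ fpos gpos [df _] _ _ [C1u _] cu _ DuE pde bd
  /andP[b1 _] [c Hc].
have n0 : (0 < n)%N by apply: leq_trans n2.
have cf : continuous f.
  by move=> x; apply: differentiable_continuous; apply/derivable1_diffP.
have du y : Om y -> differentiable u y by move=> /C1u [].
have crit x : Om x -> ((forall y, Om y -> u x <= u y) \/ (forall y, Om y -> u y <= u x)) ->
    grad u x = 0.
  move=> Ox ext; apply/rowP => i; rewrite !mxE /partial.
  exact: (@fermat R n Om u x oOm Ox du ext).
have beta0 : 0 < beta by apply: lt_le_trans b1.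
have [b [Kb Nb]] := @boundary_pt R n Om M n0 oOm Om0 HM.
have ub : u b = 0 by apply: bd.
have c0 : 0 <= c.
  by rewrite -(Hc _ Kb) ub Fprim_nonneg // mulr0 subr0 sqnorm_ge0.
have K0 : closure Om !=set0 by exists b.
have cK := @compact_closure R n Om M HM.
have [x0 /set_mem Kx0 x0min] := EVT_min_rV K0 cK cu.
have [x1 /set_mem Kx1 x1max] := EVT_max_rV K0 cK cu.
have OK y : Om y -> y \in closure Om by move=> Oy; apply/mem_set/subset_closure.
have ux0 : 0 <= u x0.
  rewrite leNgt; apply/negP => ux0.
  have Ox0 : Om x0 by apply/not_notP => N; move: ux0; rewrite (bd _ Kx0 N) ltxx.
  have g0 : grad u x0 = 0 by apply: crit => //; left => y /OK; exact: x0min.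
  move: (Hc _ Kx0); rewrite DuE // g0 sqnorm0 sub0r => Hc0.
  have : 0 < beta * Fprim f (u x0) by rewrite mulr_gt0 // Fprim_neg.
  by rewrite -oppr_lt0 Hc0 ltNge c0.
have upos y : closure Om y -> 0 <= u y.
  by move=> Ky; apply: le_trans ux0 (x0min _ (mem_set Ky)).
have [p [Op gp]] : exists p, Om p /\ grad u p = 0.
  have := x1max _ (mem_set Kb); rewrite ub le_eqVlt => /predU1P[u1|u1].
    case: Om0 => a Oa; exists a; split => //; apply: crit => //; left => y Oy.
    have := x1max _ (OK _ Oa); rewrite -u1 => ua.
    have : u a = 0 by apply/eqP; rewrite eq_le ua upos //; apply: subset_closure.
    by move=> ->; apply: upos; apply: subset_closure.
  have Ox1 : Om x1 by apply/not_notP => N; move: u1; rewrite (bd _ Kx1 N) ltxx.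
  by exists x1; split => //; apply: crit => //; right => y /OK; exact: x1max.
have cz : c = 0.
  have Kp : closure Om p by apply: subset_closure.
  by rewrite -(Hc _ Kp) DuE // gp sqnorm0 Fprim_nonneg ?upos // mulr0 subr0.
have gz y : Om y -> grad u y = 0.
  move=> Oy; have Ky : closure Om y by apply: subset_closure.
  apply: sqnorm_eq0; move: (Hc _ Ky); rewrite cz DuE // Fprim_nonneg ?upos //.
  by rewrite mulr0 subr0.
have := pde _ Op; rewrite gp sqnorm0 mulr0 mul0r addr0.
have -> : div (fun y => g (sqnorm (grad u y)) *: grad u y) p = 0.
  rewrite /div big1 // => i _; rewrite /partial.
  rewrite (@near_eq_derive _ _ _ _ (cst 0)) ?derive_cst //.
  have : nbhs p Om by apply: oOm.
  apply: filterS => y Oy; rewrite gz // scaler0 mxE //.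
move=> /esym /eqP; apply/negP; rewrite gt_eqF // mulr_gt0 //.
Qed.
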